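(* Let $0<\alpha<\beta<1$, let $\theta\in[0,1)$ and $\varphi\in V(\theta)$, and let $\theta_\varepsilon\in[0,1)$ satisfy $\theta_\varepsilon\to\theta$ as $\varepsilon\to0$. Then there exist $\varphi_\varepsilon\in V(\theta_\varepsilon)$ such that $\varphi_\varepsilon\to\varphi$ strongly in $H^1(0,1)$ as $\varepsilon\to0$.
   Context: Let $p$ be a $1$-periodic measurable function on $\mathbb{R}$ with $p>0$ and $p,p^{-1}\in L^\infty(0,1)$. Write $Q=(0,1)$, $Q_1=(0,\alpha)\cup(\beta,1)$. For $\theta\in[0,1)$, $H^1_\theta(Q)=\{u\in H^1(0,1):u(1)=e^{2\pi i\theta}u(0)\}$ (continuous representatives), and $V(\theta)=\{v\in H^1_\theta(Q): p(y)v'(y)=0\text{ for a.e. } y\in Q_1\}$. *)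

(* Defs.v *)
From HB Require Import structures.
From mathcomp Require Import all_boot all_order all_algebra.
From mathcomp Require Import all_classical all_reals all_analysis.
From mathcomp Require Import complex.
Set Implicit Arguments. Unset Strict Implicit. Unset Printing Implicit Defensive.
Import Order.TTheory GRing.Theory Num.Theory numFieldNormedType.Exports.
Local Open Scope classical_set_scope.
Local Open Scope ring_scope.

Section Sobolev1D.
Context {R : realType}.
Local Notation mu := (@lebesgue_measure R).

Definition sqmod (z : R[i]) : R := (complex.Re z) ^+ 2 + (complex.Im z) ^+ 2.

Definition L2 (D : set R) (f : R -> R) : Prop :=
  measurable_fun D f /\ (\int[mu]_(x in D) ((f x) ^+ 2)%:E < +oo)%E.

Definition cL2 (D : set R) (f : R -> R[i]) : Prop :=
  L2 D (fun x => complex.Re (f x)) /\ L2 D (fun x => complex.Im (f x)).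

(* g is a weak derivative (in L^2(0,1)) of u, u being its continuous
   representative on [0,1]:  u x = u 0 + \int_0^x g  for x in [0,1]. *)
Definition wderiv01 (u g : R -> R[i]) : Prop :=
  cL2 `[0, 1] g /\
  forall x : R, 0 <= x <= 1 ->
    u x = u 0 + Complex (Rintegral mu `[0, x] (fun t => complex.Re (g t)))
                        (Rintegral mu `[0, x] (fun t => complex.Im (g t))).

Definition H1 (u : R -> R[i]) : Prop := exists g, wderiv01 u g.

Definition H1theta (theta : R) (u : R -> R[i]) : Prop :=
  H1 u /\ u 1 = Complex (cos (2 * pi * theta)) (sin (2 * pi * theta)) * u 0.

Definition Q1 (alpha beta : R) : set R := `]0, alpha[ `|` `]beta, 1[.

Definition Vsp (p : R -> R) (alpha beta theta : R) (v : R -> R[i]) : Prop :=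
  H1theta theta v /\
  exists g, wderiv01 v g /\
    {ae mu, forall y, Q1 alpha beta y -> Complex (p y) 0 * g y = 0}.

Definition H1dist2 (u g v h : R -> R[i]) : R :=
  Rintegral mu `[0, 1] (fun x => sqmod (u x - v x)) +
  Rintegral mu `[0, 1] (fun x => sqmod (g x - h x)).

Definition admissible_coef (p : R -> R) : Prop :=
  (forall x, p (x + 1) = p x) /\
  measurable_fun setT p /\
  (forall x, 0 < p x) /\
  (exists M : R, {ae mu, forall y, y \in `]0, 1[%R -> `|p y| <= M}) /\
  (exists M : R, {ae mu, forall y, y \in `]0, 1[%R -> `|(p y)^-1| <= M}).

End Sobolev1D.

(* Main.v *)
Require Import Defs.
From HB Require Import structures.
From mathcomp Require Import all_boot all_order all_algebra.
From mathcomp Require Import all_classical all_reals all_analysis.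
From mathcomp Require Import complex.
From mathcomp Require Import measurable_realfun lra ring.
Import Order.TTheory GRing.Theory Num.Theory numFieldNormedType.Exports.
Local Open Scope classical_set_scope.
Local Open Scope ring_scope.

Section S.
Context {R : realType}.
Local Notation mu := (@lebesgue_measure R).
Local Notation I01 := (`[0, 1]%classic : set R).

Lemma ReD (z w : R[i]) : complex.Re (z + w) = complex.Re z + complex.Re w.
Proof. by case: z; case: w. Qed.
Lemma ImD (z w : R[i]) : complex.Im (z + w) = complex.Im z + complex.Im w.
Proof. by case: z; case: w. Qed.
Lemma cE (z : R[i]) : z = Complex (complex.Re z) (complex.Im z).
Proof. by case: z. Qed.

Lemma int_cst01 (k : R) : mu.-integrable I01 (EFin \o cst k).
Proof.
apply/integrableP; split; first exact/measurable_EFinP/measurable_cst.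
rewrite /= integral_cst //= lebesgue_measure_itv /=.
by rewrite lte_fin ltr01 oppr0 adde0 mule1 ltry.
Qed.

Lemma mI01 : measurable I01. Proof. exact: measurable_itv. Qed.

Lemma bnd_int (f : R -> R) (M : R) : measurable_fun I01 f ->
  (forall x, I01 x -> `|f x| <= M) -> mu.-integrable I01 (EFin \o f).
Proof.
move=> mf fM; apply: (@le_integrable _ _ _ mu I01 mI01 (EFin \o f) (EFin \o cst M)).
- exact/measurable_EFinP.
- 
  move=> x Dx /=; rewrite lee_fin (le_trans (fM x Dx)) //.
  exact: ler_norm.
- exact: int_cst01.
Qed.

Lemma L2_sq_int (f : R -> R) : L2 I01 f ->
  mu.-integrable I01 (EFin \o (fun x => f x ^+ 2)).
Proof.
move=> [mf fi]; apply/integrableP; split.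
  by apply/measurable_EFinP; exact: measurable_funX.
apply: le_lt_trans fi; rewrite le_eqVlt; apply/orP; left; apply/eqP.
apply: eq_integral => x _ /=.
by rewrite ger0_norm // sqr_ge0.
Qed.

Lemma L2_int (f : R -> R) : L2 I01 f -> mu.-integrable I01 (EFin \o f).
Proof.
move=> Lf; have [mf _] := Lf.
have i1 : mu.-integrable I01 (EFin \o (fun x => 1 + f x ^+ 2)).
  rewrite (_ : (EFin \o _) = (EFin \o cst 1) \+ (EFin \o (fun x => f x ^+ 2))).
    exact: (@integrableD _ _ _ mu I01 mI01 _ _ (int_cst01 1) (L2_sq_int f Lf)).
  by apply: funext => x.
apply: (@le_integrable _ _ _ mu I01 mI01 (EFin \o f) _ _ _ i1); first exact/measurable_EFinP.
move=> x _ /=; rewrite lee_fin [X in _ <= X]ger0_norm; last first.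
  by rewrite addr_ge0 // sqr_ge0.
have [h|h] := lerP (`|f x|) 1.
  by rewrite (le_trans h) // lerDl sqr_ge0.
rewrite -(ger0_norm (sqr_ge0 (f x))) normrX; nra.
Qed.

Lemma sqint_L2 (f : R -> R) : measurable_fun I01 f ->
  mu.-integrable I01 (EFin \o (fun x => f x ^+ 2)) -> L2 I01 f.
Proof.
move=> mf /integrableP [_ fi]; split => //.
apply: le_lt_trans fi; rewrite le_eqVlt; apply/orP; left; apply/eqP.
by apply: eq_integral => x _ /=; rewrite ger0_norm // sqr_ge0.
Qed.

Lemma L2bnd (f : R -> R) (M : R) : measurable_fun I01 f ->
  (forall x, I01 x -> `|f x| <= M) -> L2 I01 f.
Proof.
move=> mf fM; apply: sqint_L2 => //.
apply: (bnd_int _ (M ^+ 2)); first exact: measurable_funX.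
move=> x Hx; have := fM x Hx; have := normr_ge0 (f x).
rewrite normrX; nra.
Qed.

Lemma L2D (f g : R -> R) : L2 I01 f -> L2 I01 g -> L2 I01 (fun x => f x + g x).
Proof.
move=> Lf Lg; have [mf _] := Lf; have [mg _] := Lg.
have mfg : measurable_fun I01 (fun x => f x + g x) by exact: measurable_funD.
apply: sqint_L2 => //.
have ih : mu.-integrable I01 (EFin \o (fun x => f x ^+ 2 + g x ^+ 2)).
  rewrite (_ : (EFin \o _) = (EFin \o (fun x => f x ^+ 2)) \+ (EFin \o (fun x => g x ^+ 2))).
    exact: (@integrableD _ _ _ mu I01 mI01 _ _ (L2_sq_int f Lf) (L2_sq_int g Lg)).
  by apply: funext => x.
have i2 := (@integrableZl _ _ _ mu I01 mI01 2 _ ih).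
apply: (@le_integrable _ _ _ mu I01 mI01 _ _ _ _ i2).
  by apply/measurable_EFinP; exact: measurable_funX.
move=> x _ /=; rewrite lee_fin !ger0_norm.
- have := sqr_ge0 (f x - g x); nra.
- by rewrite mulr_ge0 // addr_ge0 // sqr_ge0.
- by rewrite sqr_ge0.
Qed.

Lemma setA_cap (a b x : R) : 0 < a ->
  (`[a, b]%classic `&` `[0, x]%classic) = (`[a, Num.min x b]%classic : set R).
Proof.
move=> a0; apply/seteqP; split => t /=.
  rewrite !in_itv /= => -[/andP[hat tb] /andP[t0 tx]].
  by rewrite hat /= le_min tx tb.
rewrite !in_itv /= le_min => /andP[hat /andP[tx tb]]; rewrite hat tb tx /=.
by split => //; rewrite andbT; apply: ltW; apply: lt_le_trans hat.
Qed.

Lemma mu_cap (a b x : R) : 0 < a ->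
  mu (`[a, b]%classic `&` `[0, x]%classic) = (Num.max 0 (Num.min x b - a))%:E.
Proof.
move=> a0; rewrite setA_cap // lebesgue_measure_itv /=.
case: ifP; rewrite lte_fin => h.
  by rewrite max_r ?subr_ge0 ?ltW // EFinB.
by rewrite max_l // subr_le0 leNgt h.
Qed.

Definition hh (a b : R) (t : R) : R := (b - a)^-1 * \1_(`[a, b]%classic) t.
Definition etaf (a b : R) (x : R) : R :=
  (b - a)^-1 * fine (mu (`[a, b]%classic `&` `[0, x]%classic)).

Lemma etaE (a b x : R) : 0 < a -> etaf a b x = (b - a)^-1 * Num.max 0 (Num.min x b - a).
Proof. by move=> a0; rewrite /etaf mu_cap. Qed.

Lemma eta0 (a b : R) : 0 < a -> a < b -> etaf a b 0 = 0.
Proof.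
move=> a0 ab; rewrite etaE // min_l; last by rewrite ltW // (lt_trans a0).
by rewrite max_l ?mulr0 // subr_le0 ltW.
Qed.

Lemma eta1 (a b : R) : 0 < a -> a < b -> b < 1 -> etaf a b 1 = 1.
Proof.
move=> a0 ab b1; rewrite etaE // min_r ?ltW // max_r ?subr_ge0 ?ltW //.
by rewrite mulVf // subr_eq0 gt_eqF.
Qed.

Lemma eta_bnd (a b x : R) : 0 < a -> a < b -> 0 <= etaf a b x <= 1.
Proof.
move=> a0 ab; rewrite etaE //; have ba : 0 < b - a by rewrite subr_gt0.
apply/andP; split.
  by apply: mulr_ge0; [rewrite invr_ge0 ltW | rewrite le_max lexx].
rewrite ler_pdivrMl // mulr1 ge_max subr_ge0 ltW //=.
by rewrite lerB // ge_min lexx orbT.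
Qed.

Lemma eta_meas (a b : R) : 0 < a -> measurable_fun I01 (etaf a b).
Proof.
move=> a0; rewrite (_ : etaf a b = fun x => (b - a)^-1 * Num.max 0 (Num.min x b - a)).
  apply: measurable_funM; first exact: measurable_cst.
  apply: (measurable_maxr (f := cst 0)); first exact: measurable_cst.
  apply: measurable_funB; last exact: measurable_cst.
  apply: (measurable_minr (f := id)); first exact: measurable_id.
  exact: measurable_cst.
by apply: funext => x; rewrite etaE.
Qed.

Lemma hh_meas (a b : R) : measurable_fun I01 (hh a b).
Proof.
apply: measurable_funM; first exact: measurable_cst.
apply: measurable_indic; exact: measurable_itv.
Qed.

Lemma hh_bnd (a b t : R) : a < b -> `|hh a b t| <= (b - a)^-1.
Proof.
move=> ab; have c0 : 0 <= (b - a)^-1 by rewrite invr_ge0 subr_ge0 ltW.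
rewrite /hh normrM (ger0_norm c0).
by rewrite indicE; case: (_ \in _); rewrite ?normr1 ?normr0 ?mulr1 ?mulr0.
Qed.

Lemma int_hh (a b x r : R) : 0 < a -> a < b -> 0 <= x <= 1 ->
  Rintegral mu `[0, x] (fun t => r * hh a b t) = r * etaf a b x.
Proof.
move=> a0 ab /andP[x0 x1].
have mA : measurable (`[a, b]%classic : set R) by exact: measurable_itv.
have mX : measurable (`[0, x]%classic : set R) by exact: measurable_itv.
have iA : mu.-integrable `[0, x] (EFin \o \1_(`[a, b]%classic)).
  apply: (@integrableS _ _ _ mu I01) => //.
    by move=> t /=; rewrite !in_itv /= => /andP[-> tx]; exact: le_trans x1.
  apply: (bnd_int _ 1); first exact: measurable_indic.
  by move=> t _; rewrite indicE; case: (_ \in _); rewrite ?normr1 ?normr0.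
rewrite /hh; under eq_Rintegral do rewrite mulrA.
rewrite RintegralZl // /etaf mulrA; congr (_ * _).
by rewrite /Rintegral integral_indic.
Qed.

Lemma ReM (c s : R) (z : R[i]) :
  complex.Re (Complex c s * z) = c * complex.Re z - s * complex.Im z.
Proof. by case: z. Qed.
Lemma ImM (c s : R) (z : R[i]) :
  complex.Im (Complex c s * z) = c * complex.Im z + s * complex.Re z.
Proof. by case: z. Qed.
Lemma ReB (z w : R[i]) : complex.Re (z - w) = complex.Re z - complex.Re w.
Proof. by case: z; case: w. Qed.
Lemma ImB (z w : R[i]) : complex.Im (z - w) = complex.Im z - complex.Im w.
Proof. by case: z; case: w. Qed.
Lemma sub_addl (u v : R[i]) : u + v - u = v.
Proof. by rewrite addrC addKr. Qed.

End S.

Theorem lemma2p2 (R : realType) (p : R -> R) (alpha beta theta : R)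
  (phi : R -> R[i]) (theta_e : R -> R) :
  admissible_coef p ->
  0 < alpha -> alpha < beta -> beta < 1 ->
  0 <= theta < 1 ->
  Vsp p alpha beta theta phi ->
  (forall e : R, 0 < e -> 0 <= theta_e e < 1) ->
  theta_e e @[e --> 0^'+] --> theta ->
  exists (phi_e dphi_e : R -> R -> R[i]) (dphi : R -> R[i]),
    wderiv01 phi dphi /\
    (forall e : R, 0 < e ->
       Vsp p alpha beta (theta_e e) (phi_e e) /\ wderiv01 (phi_e e) (dphi_e e)) /\
    H1dist2 (phi_e e) (dphi_e e) phi dphi @[e --> 0^'+] --> 0.
Proof.
pose mu := (@lebesgue_measure R).
move=> _ a0 ab b1 _ [[_ bc] [g [wg ae]]] _ cvth.
pose lam t : R[i] := Complex (cos (2 * pi * t)) (sin (2 * pi * t)).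
pose k e := lam (theta_e e) * phi 0 - phi 1.
pose psi e x : R[i] := Complex (complex.Re (k e) * etaf alpha beta x)
                               (complex.Im (k e) * etaf alpha beta x).
pose dpsi e x : R[i] := Complex (complex.Re (k e) * hh alpha beta x)
                                (complex.Im (k e) * hh alpha beta x).
have hL2 : forall r : R, L2 `[0, 1] (fun t => r * hh alpha beta t).
  move=> r; apply: (L2bnd _ (`|r| * (beta - alpha)^-1)).
    by apply: measurable_funM; [exact: measurable_cst | exact: hh_meas].
  by move=> t _; rewrite normrM ler_wpM2l // hh_bnd.
have hint : forall (f : R -> R) x, 0 <= x <= 1 -> mu.-integrable `[0, 1] (EFin \o f) ->
     mu.-integrable `[0, x] (EFin \o f).
  move=> f x /andP[x0 x1] fi; apply: (@integrableS _ _ _ mu `[0, 1]) => //.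
  by move=> t /=; rewrite !in_itv /= => /andP[-> tx]; exact: le_trans x1.
have wd : forall e, wderiv01 (fun x => phi x + psi e x) (fun t => g t + dpsi e t).
  move=> e; have [[Lr Li] wgx] := wg; split.
    split.
      rewrite (_ : (fun x => _) = fun x => complex.Re (g x) + complex.Re (k e) * hh alpha beta x).
        exact: L2D.
      by apply: funext => x; rewrite ReD.
    rewrite (_ : (fun x => _) = fun x => complex.Im (g x) + complex.Im (k e) * hh alpha beta x).
      exact: L2D.
    by apply: funext => x; rewrite ImD.
  move=> x hx; rewrite (wgx x hx).
  have mX : measurable (`[0, x]%classic : set R) by exact: measurable_itv.
  rewrite /psi /dpsi eta0 // !mulr0.
  under [X in _ = _ + (X +i* _)%C]eq_Rintegral => t _ do rewrite ReD /=.
  under [X in _ = _ + (_ +i* X)%C]eq_Rintegral => t _ do rewrite ImD /=.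
  rewrite RintegralD //; last 2 first.
  - by apply: hint => //; exact: L2_int.
  - by apply: hint => //; exact: L2_int.
  rewrite RintegralD //; last 2 first.
  - by apply: hint => //; exact: L2_int.
  - by apply: hint => //; exact: L2_int.
  rewrite !int_hh //.
  case: (phi 0) => u v /=; congr (_ +i* _)%C; ring.
exists (fun e x => phi x + psi e x), (fun e t => g t + dpsi e t), g.
split; first exact: wg.
split.
  move=> e _; split; last exact: wd.
  split.
    split; first by exists (fun t => g t + dpsi e t); exact: wd.
    rewrite /psi eta0 // eta1 // !mulr0 !mulr1 addr0 -cE /k.
    by rewrite addrC subrK.
  exists (fun t => g t + dpsi e t); split; first exact: wd.
  have Fae := @ae_filter_ringOfSetsType _ _ R (@lebesgue_measure R).
  apply: (filterS _ ae) => y Hy Qy.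
  have h0 : hh alpha beta y = 0.
    rewrite /hh indicE memNset ?mulr0 //= in_itv /= => /andP[ay yb].
    by case: Qy => /=; rewrite in_itv /= => /andP[y1 y2]; lra.
  rewrite /dpsi h0 !mulr0 addr0; exact: Hy.
pose s e := complex.Re (k e) ^+ 2 + complex.Im (k e) ^+ 2.
pose I1 := Rintegral mu `[0, 1] (fun x => etaf alpha beta x ^+ 2).
pose I2 := Rintegral mu `[0, 1] (fun x => hh alpha beta x ^+ 2).
have sq1 : forall e x, sqmod (psi e x) = s e * etaf alpha beta x ^+ 2.
  by move=> e x; rewrite /sqmod /s /=; ring.
have sq2 : forall e x, sqmod (dpsi e x) = s e * hh alpha beta x ^+ 2.
  by move=> e x; rewrite /sqmod /s /=; ring.
have mI : measurable (`[0, 1]%classic : set R) by exact: measurable_itv.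
have eqd : forall e, H1dist2 (fun x => phi x + psi e x) (fun t => g t + dpsi e t) phi g
    = s e * I1 + s e * I2.
  move=> e; rewrite /H1dist2.
  under eq_Rintegral do rewrite sub_addl sq1.
  under [X in _ + X = _]eq_Rintegral do rewrite sub_addl sq2.
  rewrite RintegralZl //; last first.
    apply: (bnd_int _ 1); first exact: measurable_funX (eta_meas alpha beta a0).
    move=> x _; have /andP[h1 h2] := eta_bnd alpha beta x a0 ab.
    by rewrite ger0_norm ?sqr_ge0 //; nra.
  rewrite RintegralZl //.
  apply: (bnd_int _ ((beta - alpha)^-1 ^+ 2)); first exact: measurable_funX (hh_meas alpha beta).
  move=> x _; have := hh_bnd alpha beta x ab; have := normr_ge0 (hh alpha beta x).
  by rewrite normrX; nra.
rewrite (_ : (fun e => _) = fun e => s e * I1 + s e * I2); last first.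
  by apply: funext => e; exact: eqd.
have h2 : (fun e => 2 * pi * theta_e e) @ 0^'+ --> 2 * pi * theta.
  by apply: cvgM; [exact: cvg_cst | exact: cvth].
have hc : (fun e => cos (2 * pi * theta_e e)) @ 0^'+ --> cos (2 * pi * theta).
  by apply: (cvg_comp _ _ h2); exact: continuous_cos.
have hs : (fun e => sin (2 * pi * theta_e e)) @ 0^'+ --> sin (2 * pi * theta).
  by apply: (cvg_comp _ _ h2); exact: continuous_sin.
have hR : (fun e => complex.Re (k e)) @ 0^'+ --> 0.
  have -> : (fun e => complex.Re (k e)) = fun e =>
     cos (2 * pi * theta_e e) * complex.Re (phi 0)
     - sin (2 * pi * theta_e e) * complex.Im (phi 0) - complex.Re (phi 1).
    by apply: funext => e; rewrite /k /lam ReB; case: (phi 0) => u v /=.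
  have E : cos (2 * pi * theta) * complex.Re (phi 0)
     - sin (2 * pi * theta) * complex.Im (phi 0) - complex.Re (phi 1) = 0.
    by rewrite bc; move: (phi 0) => [u v] /=; rewrite subrr.
  rewrite -[X in _ --> X]E; apply: cvgB; last exact: cvg_cst.
  by apply: cvgB; [exact: (cvgM hc (cvg_cst _)) | exact: (cvgM hs (cvg_cst _))].
have hI : (fun e => complex.Im (k e)) @ 0^'+ --> 0.
  have -> : (fun e => complex.Im (k e)) = fun e =>
     cos (2 * pi * theta_e e) * complex.Im (phi 0)
     + sin (2 * pi * theta_e e) * complex.Re (phi 0) - complex.Im (phi 1).
    by apply: funext => e; rewrite /k /lam ImB; case: (phi 0) => u v /=.
  have E : cos (2 * pi * theta) * complex.Im (phi 0)
     + sin (2 * pi * theta) * complex.Re (phi 0) - complex.Im (phi 1) = 0.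
    by rewrite bc; move: (phi 0) => [u v] /=; rewrite subrr.
  rewrite -[X in _ --> X]E; apply: cvgB; last exact: cvg_cst.
  by apply: cvgD; [exact: (cvgM hc (cvg_cst _)) | exact: (cvgM hs (cvg_cst _))].
have hS : s e @[e --> 0^'+] --> 0.
  have E : (0 : R) * 0 + 0 * 0 = 0 by rewrite !mulr0 addr0.
  by rewrite /s -[X in _ --> X]E; apply: cvgD; [exact: (cvgM hR hR) | exact: (cvgM hI hI)].
have E : (0 : R) * I1 + 0 * I2 = 0 by rewrite !mul0r addr0.
by rewrite -[X in _ --> X]E; apply: cvgD; [exact: (cvgM hS (cvg_cst _)) | exact: (cvgM hS (cvg_cst _))].
Qed.
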